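(* Let $n\ge 2$ and let $M$ be a uniformly random $n\times n$ matrix with independent entries uniform on $\{-1,+1\}$. Let $R_{11}$ be the event that two distinct columns of $M$ are equal up to sign, and $L_{11}$ the event that two distinct rows of $M$ are equal up to sign. Then $$\mathbb{P}(R_{11}\setminus L_{11})\ \ge\ 2\binom n2\Big(\frac12\Big)^n-\Big(12\binom n2^2-4\binom n2\Big)\Big(\frac14\Big)^n,$$ and, as $n\to\infty$, $$\mathbb{P}(R_{11}\setminus L_{11})=\mathbb{P}(R_{11})-8\binom n2^2\Big(\frac14\Big)^n+O\big(n^6 2^{-3n}\big).$$
   Context: Vectors $x,y\in\{-1,1\}^n$ are equal up to sign if $x=\pm y$. Equivalently, $R_{11}$ (resp. $L_{11}$) is the event that $M$ has a right null vector $Mv=0$ (resp. left null vector $vM=0$) of the form $e_i\pm e_j$, $i\ne j$. *)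

(* Defs.v *)
From HB Require Import structures.
From mathcomp Require Import all_boot all_order all_algebra.
Set Implicit Arguments. Unset Strict Implicit. Unset Printing Implicit Defensive.
Import Order.TTheory GRing.Theory Num.Theory.
Local Open Scope ring_scope.

(* A random +-1 matrix is encoded as M : 'M[bool]_n, entry b standing for pm b. *)
Definition pm (b : bool) : int := if b then 1 else -1.

Definition cols_eq_up_to_sign n (M : 'M[bool]_n) (i j : 'I_n) : bool :=
  [forall k, pm (M k i) == pm (M k j)] || [forall k, pm (M k i) == - pm (M k j)].

Definition rows_eq_up_to_sign n (M : 'M[bool]_n) (i j : 'I_n) : bool :=
  [forall k, pm (M i k) == pm (M j k)] || [forall k, pm (M i k) == - pm (M j k)].

Definition R11 n (M : 'M[bool]_n) : bool :=
  [exists i, exists j, (i != j) && cols_eq_up_to_sign M i j].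
Definition L11 n (M : 'M[bool]_n) : bool :=
  [exists i, exists j, (i != j) && rows_eq_up_to_sign M i j].

Definition prob n (E : pred 'M[bool]_n) : rat :=
  #|[set M | E M]|%:R / (2 ^ (n * n))%:R.

(* Main.v *)
Require Import Defs.
From HB Require Import structures.
From mathcomp Require Import all_boot all_order all_algebra.
From mathcomp Require Import zify ring lra.
Set Implicit Arguments. Unset Strict Implicit. Unset Printing Implicit Defensive.
Import Order.TTheory GRing.Theory Num.Theory.

Lemma sumcardT (T : finType) (X : {set T}) : \sum_x ((x \in X) : nat) = #|X|.
Proof. by rewrite -sum1_card [RHS]big_mkcond /=; apply: eq_bigr => x _; case: (x \in X). Qed.

Lemma sum_lt i m : \sum_(0 <= j < m) ((i < j)%N : nat) = m - i.+1.
Proof.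
elim: m => [|m IH]; first by rewrite big_geq.
rewrite big_nat_recr //= IH; case: (ltnP i m) => /= H; lia.
Qed.

Lemma cardPairs n : #|[set p : 'I_n * 'I_n | (p.1 < p.2)%N]| = 'C(n, 2).
Proof.
rewrite -sumcardT (eq_bigr (fun p : 'I_n * 'I_n => ((p.1 < p.2)%N : nat))); last by move=> p _; rewrite inE.
rewrite -(pair_bigA _ (fun i j : 'I_n => ((i < j)%N : nat))) /=.
rewrite -bin2_sum big_nat_rev /= big_mkord; apply: eq_bigr => i _.
by rewrite -(big_mkord predT (fun j => ((i < j)%N : nat))) sum_lt add0n.
Qed.


Lemma sq_sum (I : finType) (X : {set I}) (x : I -> bool) :
  (\sum_(p in X) (x p : nat)) * (\sum_(p in X) (x p : nat)) =
  \sum_(p in X) (x p : nat) + \sum_(p in X) \sum_(q in X | q != p) ((x p && x q) : nat).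
Proof.
rewrite big_distrl -big_split; apply: eq_bigr => p pX /=.
rewrite (bigD1 p pX) /= mulnDr big_distrr /=; congr (_ + _); first by case: (x p).
by apply: eq_bigr => q _; case: (x p); case: (x q).
Qed.

Lemma pos_sum (I : finType) (X : {set I}) (x : I -> bool) :
  (0 < \sum_(p in X) (x p : nat))%N = [exists p in X, x p].
Proof.
rewrite lt0n sum_nat_eq0 negb_forall; apply: eq_existsb => p.
by case: (p \in X); case: (x p).
Qed.

Lemma sum_bound (I : finType) (Q : pred I) (F : I -> nat) k B :
  (forall i, Q i -> F i * k <= B)%N ->
  ((\sum_(i | Q i) F i) * k <= #|[set i | Q i]| * B)%N.
Proof. by move=> H; rewrite big_distrl -sum_nat_cond_const; apply: leq_sum. Qed.

Lemma sum_bound_ge (I : finType) (Q : pred I) (F : I -> nat) k B :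
  (forall i, Q i -> B <= F i * k)%N ->
  (#|[set i | Q i]| * B <= (\sum_(i | Q i) F i) * k)%N.
Proof. by move=> H; rewrite big_distrl -sum_nat_cond_const; apply: leq_sum. Qed.

Lemma setmem (I : finType) (X : {set I}) : [set i | i \in X] = X.
Proof. by apply/setP => i; rewrite inE. Qed.

Lemma card_minus (I : finType) (X : {set I}) p : p \in X ->
  #|[set q | (q \in X) && (q != p)]| = (#|X| - 1)%N.
Proof.
move=> pX; rewrite (cardsD1 p X) pX add1n subn1 /=; apply: eq_card => q.
by rewrite !inE andbC.
Qed.

Section Chars.
Variable n : nat.
Local Notation pos := ('I_n * 'I_n)%type.
Local Notation mat := 'M[bool]_n.

Lemma pm_eq a b : (pm a == pm b) = (a == b).
Proof. by case: a; case: b. Qed.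
Lemma pm_eqN a b : (pm a == (- pm b)%R) = (a == ~~ b).
Proof. by case: a; case: b. Qed.

Lemma colsP (M : mat) i j : cols_eq_up_to_sign M i j ->
  forall k k', M k i (+) M k j = M k' i (+) M k' j.
Proof.
case/orP => /forallP H k k'; have := H k; have := H k';
  rewrite ?pm_eq ?pm_eqN => /eqP -> /eqP ->; by case: (M k j); case: (M k' j).
Qed.

Lemma colsI (M : mat) i j c : (forall k, M k i (+) M k j = c) -> cols_eq_up_to_sign M i j.
Proof.
move=> H; apply/orP; case: c H => H; [right | left]; apply/forallP => k;
  rewrite ?pm_eq ?pm_eqN; have := H k; by case: (M k i); case: (M k j).
Qed.

Lemma rowsP (M : mat) a b : rows_eq_up_to_sign M a b ->
  forall l l', M a l (+) M b l = M a l' (+) M b l'.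
Proof.
case/orP => /forallP H k k'; have := H k; have := H k';
  rewrite ?pm_eq ?pm_eqN => /eqP -> /eqP ->; by case: (M b k); case: (M b k').
Qed.

Lemma rowsI (M : mat) a b c : (forall l, M a l (+) M b l = c) -> rows_eq_up_to_sign M a b.
Proof.
move=> H; apply/orP; case: c H => H; [right | left]; apply/forallP => k;
  rewrite ?pm_eq ?pm_eqN; have := H k; by case: (M a k); case: (M b k).
Qed.

Lemma rows_tr (M : mat) a b : rows_eq_up_to_sign M a b = cols_eq_up_to_sign M^T a b.
Proof.
by rewrite /rows_eq_up_to_sign /cols_eq_up_to_sign; congr orb; apply: eq_forallb => k; rewrite !mxE.
Qed.

Lemma cols_sym (M : mat) i j : cols_eq_up_to_sign M i j = cols_eq_up_to_sign M j i.
Proof.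
apply/idP/idP => H; have := colsP H => {}H; apply: (@colsI _ _ _ (M i j (+) M i i)) => k;
  have := H k i; by case: (M k i); case: (M k j); case: (M i i); case: (M i j).
Qed.

Lemma xorS a b c : a (+) b = c -> a = b (+) c.
Proof. by case: a; case: b; case: c. Qed.

Definition colseg (i : 'I_n) (X : {set 'I_n}) : {set pos} := [set (k, i) | k in X].
Definition rowseg (a : 'I_n) (Y : {set 'I_n}) : {set pos} := [set (a, l) | l in Y].

Lemma mem_colseg i X k l : ((k, l) \in colseg i X) = (l == i) && (k \in X).
Proof.
apply/imsetP/andP => [[k' H [-> ->]] | [/eqP -> H]]; [by rewrite eqxx | by exists k].
Qed.
Lemma mem_rowseg a Y k l : ((k, l) \in rowseg a Y) = (k == a) && (l \in Y).
Proof.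
apply/imsetP/andP => [[k' H [-> ->]] | [/eqP -> H]]; [by rewrite eqxx | by exists l].
Qed.
Lemma card_colseg i X : #|colseg i X| = #|X|.
Proof. by apply: card_imset => x y [->]. Qed.
Lemma card_rowseg a X : #|rowseg a X| = #|X|.
Proof. by apply: card_imset => x y [->]. Qed.

Lemma card_dU (A B : {set pos}) : [disjoint A & B] -> #|A :|: B| = #|A| + #|B|.
Proof. by move=> d; apply/eqP; rewrite (leq_card_setU A B).2. Qed.

Lemma card_C1 (i : 'I_n) : #|~: [set i]| = n.-1.
Proof. by rewrite cardsC1 card_ord. Qed.
Lemma card_C2 (a b : 'I_n) : a != b -> #|~: [set a; b]| = n - 2.
Proof. move=> ab; have := cardsC [set a; b]; rewrite cards2 ab card_ord; lia. Qed.

Definition res (S : {set pos}) (M : mat) : {ffun pos -> bool} :=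
  [ffun x => if x \in S then false else M x.1 x.2].

Lemma card_compl (S : {set pos}) : #|~: S| + #|S| = n * n.
Proof. by rewrite addnC cardsC card_prod card_ord. Qed.

Lemma card_D (S : {set pos}) :
  #|pffun_on false (~: S) (@predT bool)| = 2 ^ #|~: S|.
Proof. by rewrite card_pffun_on card_bool. Qed.

Lemma res_in S M : res S M \in pffun_on false (~: S) (@predT bool).
Proof.
apply/pffun_onP; split => //.
apply/subsetP => x; rewrite inE ffunE inE; by case: (x \in S).
Qed.

Lemma upper (E : {set mat}) (S : {set pos}) :
  {in E &, forall M M' : mat, (forall k l, (k, l) \notin S -> M k l = M' k l) -> M = M'} ->
  (#|E| * 2 ^ #|S| <= 2 ^ (n * n))%N.
Proof.
move=> H.
have inj : {in E &, injective (res S)}.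
  move=> M M' HM HM' e; apply: H => // k l kl.
  by have := congr1 (fun f : {ffun pos -> bool} => f (k, l)) e; rewrite !ffunE /= (negbTE kl).
rewrite -(card_in_imset inj) -(card_compl S) expnD leq_mul2r; apply/orP; right.
rewrite -card_D; apply: subset_leq_card; apply/subsetP => f /imsetP[M _ ->].
exact: res_in.
Qed.

Lemma lower (E : {set mat}) (S : {set pos}) (g : {ffun pos -> bool} -> mat) :
  (forall f, g f \in E) -> (forall f k l, (k, l) \notin S -> g f k l = f (k, l)) ->
  (2 ^ (n * n) <= #|E| * 2 ^ #|S|)%N.
Proof.
move=> gE gS.
pose D := [set f | f \in pffun_on false (~: S) (@predT bool)].
have inj : {in D &, injective g}.
  have K f : f \in D -> res S (g f) = f.
    rewrite inE => /pffun_onP[/subsetP sup _]; apply/ffunP => -[k l]; rewrite ffunE /=.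
    case: ifP => kS; last by rewrite gS // kS.
    apply/esym/negbTE/negP => fx; have := sup (k, l); rewrite !inE /= fx kS.
    by move=> H; have := H isT.


  by move=> f f' Hf Hf' e; rewrite -(K f Hf) -(K f' Hf') e.
rewrite -(card_compl S) expnD leq_mul2r; apply/orP; right.
have -> : 2 ^ #|~: S| = #|D|.
  by rewrite -card_D; apply: eq_card => f; rewrite in_set.
rewrite -(card_in_imset inj); apply: subset_leq_card; apply/subsetP => _ /imsetP[f _ ->].
exact: gE.
Qed.

Lemma C1 (i j : 'I_n) : i != j ->
  (2 ^ (n * n) <= #|[set M : mat | cols_eq_up_to_sign M i j]| * 2 ^ n.-1)%N.
Proof.
move=> ij; have ji : (j == i) = false by apply/negbTE; rewrite eq_sym.
have := @lower [set M : mat | cols_eq_up_to_sign M i j] (colseg i (~: [set i]))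
  (fun f => (\matrix_(k, l) if (l == i) && (k != i) then f (k, j) (+) (f (i, i) (+) f (i, j)) else f (k, l))%R).
rewrite card_colseg card_C1; apply.
- move=> f; rewrite inE; apply: (@colsI _ _ _ (f (i, i) (+) f (i, j))) => k.
  rewrite !mxE ji /= (eqxx i) /=.
  have [->|kn] := eqVneq k i; first by [].
  rewrite /=.
  by case: (f (k, j)); case: (f (i, i)); case: (f (i, j)).
- by move=> f k l; rewrite mem_colseg in_setC in_set1 mxE => /negbTE ->.
Qed.

Lemma C2 (i j u v : 'I_n) : i != j -> u != i -> u != j -> u != v ->
  (#|[set M : mat | cols_eq_up_to_sign M i j && cols_eq_up_to_sign M u v]|
     * 2 ^ (n.-1 + n.-1) <= 2 ^ (n * n))%N.
Proof.
move=> ij ui uj uv.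
have ji : (j == i) = false by apply/negbTE; rewrite eq_sym.
have ju : (j == u) = false by apply/negbTE; rewrite eq_sym.
have iu : (i == u) = false by apply/negbTE; rewrite eq_sym.
set S := colseg i (~: [set i]) :|: colseg u (~: [set i]).
have memS k l : ((k, l) \in S) = ((l == i) || (l == u)) && (k != i).
  by rewrite in_setU !mem_colseg !in_setC1 andb_orl.
have := @upper [set M : mat | cols_eq_up_to_sign M i j && cols_eq_up_to_sign M u v] S.
rewrite card_dU ?card_colseg ?card_C1; last first.
  rewrite -setI_eq0; apply/eqP/setP => -[k l]; rewrite !inE !mem_colseg.
  by have [->|_] := eqVneq l i; rewrite ?iu /= ?andbF.
apply=> M M'; rewrite !inE => /andP[H1 H2] /andP[H1' H2'] Hout.
have nu k l : l != u -> M k l = M' k l.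
  move=> lu; case: (l =P i) => [->|li].
    rewrite (xorS (colsP H1 k i)) (xorS (colsP H1' k i)) !Hout //;
      by rewrite memS ?eqxx ?ji ?ju ?iu.
  by apply: Hout; rewrite memS (negbTE lu); move/eqP/negbTE: li => ->.
apply/matrixP => k l; case: (l =P u) => [->|/eqP lu]; last exact: nu.
rewrite (xorS (colsP H2 k i)) (xorS (colsP H2' k i)) (nu k v) 1?eq_sym // (nu i v) 1?eq_sym //.
by rewrite (Hout i u) // memS (eqxx i) andbF.
Qed.

Definition S3 (i j a b : 'I_n) := colseg i (~: [set a; b]) :|: rowseg a (~: [set j]).

Lemma memS3 i j a b k l :
  ((k, l) \in S3 i j a b) = (l == i) && (k != a) && (k != b) || (k == a) && (l != j).
Proof. by rewrite in_setU mem_colseg mem_rowseg !inE negb_or andbA. Qed.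

Lemma cardS3 i j a b : a != b -> #|S3 i j a b| = (n - 2 + n.-1)%N.
Proof.
move=> ab; rewrite card_dU ?card_colseg ?card_rowseg ?card_C2 ?card_C1 //.
rewrite -setI_eq0; apply/eqP/setP => -[k l]; rewrite in_setI mem_colseg mem_rowseg !inE.
by have [->|] := eqVneq k a; rewrite /= ?andbF.
Qed.

Definition E3 (i j a b : 'I_n) :=
  [set M : mat | cols_eq_up_to_sign M i j && rows_eq_up_to_sign M a b].

Lemma C3u (i j a b : 'I_n) : i != j -> a != b ->
  (#|E3 i j a b| * 2 ^ (n - 2 + n.-1) <= 2 ^ (n * n))%N.
Proof.
move=> ij ab; have ji : (j == i) = false by apply/negbTE; rewrite eq_sym.
have ba : (b == a) = false by apply/negbTE; rewrite eq_sym.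
rewrite -(cardS3 i j ab); apply: upper.
move=> M M'; rewrite !inE => /andP[H1 H2] /andP[H1' H2'] Hout.
apply/matrixP => k l.
have [->|ka] := eqVneq k a.
  rewrite (xorS (rowsP H2 l j)) (xorS (rowsP H2' l j)) !Hout //;
    by rewrite memS3 ?(eqxx a) ?(eqxx b) ?(eqxx j) ?ji ?ba /= ?andbF.
have [->|li] := eqVneq l i.
  rewrite (xorS (colsP H1 k b)) (xorS (colsP H1' k b)) !Hout //;
    by rewrite memS3 ?(eqxx a) ?(eqxx b) ?(eqxx j) ?ji ?ba ?(negbTE ka) /= ?andbF.
by rewrite Hout // memS3 (negbTE ka) (negbTE li).
Qed.

Lemma C3l (i j a b : 'I_n) : i != j -> a != b ->
  (2 ^ (n * n) <= #|E3 i j a b| * 2 ^ (n - 2 + n.-1))%N.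
Proof.
move=> ij ab; have ji : (j == i) = false by apply/negbTE; rewrite eq_sym.
have ba : (b == a) = false by apply/negbTE; rewrite eq_sym.
rewrite -(cardS3 i j ab).
apply: (@lower _ _ (fun f => (\matrix_(k, l)
   if (k == a) && (l != j) then f (b, l) (+) (f (a, j) (+) f (b, j))
   else if (l == i) && (k != b) then f (k, j) (+) (f (b, i) (+) f (b, j))
   else f (k, l))%R)).
- move=> f; rewrite inE; apply/andP; split.
  + apply: (@colsI _ _ _ (f (b, i) (+) f (b, j))) => k; rewrite !mxE.
    have [->|ka] := eqVneq k a.
      rewrite ij (eqxx j) ji /=.
      by case: (f (b, i)); case: (f (a, j)); case: (f (b, j)).
    rewrite (eqxx i) ji /=.
    have [->|kb] := eqVneq k b => //=.
    by case: (f (k, j)); case: (f (b, i)); case: (f (b, j)).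
  + apply: (@rowsI _ _ _ (f (a, j) (+) f (b, j))) => l; rewrite !mxE.
    rewrite (eqxx a) ba (eqxx b) /= andbF.
    have [->|lj] := eqVneq l j; first by rewrite /= ji.
    by case: (f (b, l)); case: (f (a, j)); case: (f (b, j)).
- move=> f k l; rewrite memS3 mxE.
  have [->|ka] := eqVneq k a; have [->|li] := eqVneq l i; rewrite /= ?andbF ?orbF //.
  + by rewrite ij.
  + by move/negbTE => ->.
  + by move/negbTE => ->.
Qed.

Definition S4 (i j u a b : 'I_n) :=
  colseg i (~: [set a; b]) :|: colseg u (~: [set a; b]) :|: rowseg a (~: [set j]).

Lemma memS4 i j u a b k l :
  ((k, l) \in S4 i j u a b) =
  ((l == i) || (l == u)) && (k != a) && (k != b) || (k == a) && (l != j).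
Proof.
by rewrite !in_setU !mem_colseg mem_rowseg !inE !negb_or -andb_orl andbA.
Qed.

Lemma cardS4 i j u a b : a != b -> i != u ->
  #|S4 i j u a b| = (n - 2 + (n - 2) + n.-1)%N.
Proof.
move=> ab iu; rewrite card_dU ?card_dU ?card_colseg ?card_rowseg ?card_C2 ?card_C1 //.
  rewrite -setI_eq0; apply/eqP/setP => -[k l]; rewrite in_setI !mem_colseg !inE.
  by have [->|] := eqVneq l i; rewrite /= ?(negbTE iu) ?andbF.
rewrite -setI_eq0; apply/eqP/setP => -[k l]; rewrite in_setI in_setU !mem_colseg mem_rowseg !inE.
by have [->|] := eqVneq k a; rewrite /= ?andbF.
Qed.

Definition E4 (i j u v a b : 'I_n) :=
  [set M : mat | [&& cols_eq_up_to_sign M i j, cols_eq_up_to_sign M u v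
                   & rows_eq_up_to_sign M a b]].

Lemma C4 (i j u v a b : 'I_n) : i != j -> u != i -> u != j -> u != v -> a != b ->
  (#|E4 i j u v a b| * 2 ^ (n - 2 + (n - 2) + n.-1) <= 2 ^ (n * n))%N.
Proof.
move=> ij ui uj uv ab.
have ji : (j == i) = false by apply/negbTE; rewrite eq_sym.
have ju : (j == u) = false by apply/negbTE; rewrite eq_sym.
have iu : i != u by rewrite eq_sym.
have ba : (b == a) = false by apply/negbTE; rewrite eq_sym.
rewrite -(cardS4 j ab iu); apply: upper.
move=> M M'; rewrite !inE => /and3P[H1 H2 H3] /and3P[H1' H2' H3'] Hout.
have rb l : M b l = M' b l by rewrite Hout // memS4 (eqxx b) ba /= !andbF.
have ci k : k != a -> M k i = M' k i.
  move=> ka; rewrite (xorS (colsP H1 k b)) (xorS (colsP H1' k b)) !rb Hout //.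
  by rewrite memS4 ji ju (negbTE ka).
have cu k : k != a -> M k u = M' k u.
  move=> ka; rewrite (xorS (colsP H2 k b)) (xorS (colsP H2' k b)) !rb.
  have [->|vi] := eqVneq v i; first by rewrite ci.
  by rewrite Hout // memS4 (negbTE ka) /= (negbTE vi) (eq_sym v) (negbTE uv).
apply/matrixP => k l.
have [->|ka] := eqVneq k a.
  rewrite (xorS (rowsP H3 l j)) (xorS (rowsP H3' l j)) !rb Hout //.
  by rewrite memS4 (eqxx a) (eqxx j) /= andbF.
have [->|li] := eqVneq l i; first exact: ci.
have [->|lu] := eqVneq l u; first exact: cu.
by rewrite Hout // memS4 (negbTE ka) (negbTE li) (negbTE lu).
Qed.

Definition P : {set pos} := [set p : pos | (p.1 < p.2)%N].
Definition AP (p : pos) := [set M : mat | cols_eq_up_to_sign M p.1 p.2].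
Definition BP (p : pos) := [set M : mat | rows_eq_up_to_sign M p.1 p.2].

Lemma P_neq p : p \in P -> p.1 != p.2.
Proof. by rewrite inE => H; apply: contraTneq H => ->; rewrite ltnn. Qed.

Lemma P_n2 p : p \in P -> (2 <= n)%N.
Proof. rewrite inE => H; have := ltn_ord p.2; move: H; case: p => [[a ?] [b ?]] /=; lia. Qed.

Lemma e1 : (0 < n)%N -> 2 ^ n = 2 * 2 ^ n.-1.
Proof. by move=> H; rewrite -expnS prednK. Qed.
Lemma e2 : (2 <= n)%N -> 2 ^ n = 4 * 2 ^ (n - 2).
Proof. by move=> H; rewrite -[4]/(2 ^ 2) -expnD subnKC. Qed.

Lemma L1 p : p \in P -> (2 * 2 ^ (n * n) <= #|AP p| * 2 ^ n)%N.
Proof.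
move=> pP; have n2 := P_n2 pP; have := C1 (P_neq pP).
rewrite (e1 (ltnW n2)) mulnCA leq_mul2l /=; exact.
Qed.

Lemma pick_uv p q : p \in P -> q \in P -> p != q ->
  exists u v, [/\ u != p.1, u != p.2, u != v &
                 forall M : mat, (M \in AP q) = cols_eq_up_to_sign M u v].
Proof.
case: p q => i j [k l]; rewrite !inE /= => ij kl pq.
have kl' : k != l by apply: contraTneq kl => ->; rewrite ltnn.
have [/andP[ki kj]|] := boolP ((k != i) && (k != j)).
  by exists k, l; split => // M; rewrite inE.
have [/andP[li lj]|] := boolP ((l != i) && (l != j)).
  by exists l, k; split => //; [rewrite eq_sym | move=> M; rewrite inE cols_sym].
rewrite !negb_and !negbK => /orP[/eqP ki|/eqP kj] /orP[/eqP li|/eqP lj]; subst;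
  try (by rewrite ltnn in kl); try lia. by rewrite eqxx in pq.
Qed.

Lemma L2 p q : p \in P -> q \in P -> p != q ->
  (#|AP p :&: AP q| * (2 ^ n * 2 ^ n) <= 4 * 2 ^ (n * n))%N.
Proof.
move=> pP qP pq; have n2 := P_n2 pP.
have [u [v [u1 u2 uv Hq]]] := pick_uv pP qP pq.
have := C2 (P_neq pP) u1 u2 uv.
have -> : [set M : mat | cols_eq_up_to_sign M p.1 p.2 && cols_eq_up_to_sign M u v]
   = AP p :&: AP q by apply/setP => M; rewrite in_setI Hq !inE.
rewrite (e1 (ltnW n2)) expnD.
have -> : forall x y : nat, x * (2 * y * (2 * y)) = 4 * (x * (y * y)) by move=> x y; ring.
by rewrite leq_mul2l.
Qed.

Lemma L3 p r : p \in P -> r \in P ->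
  #|AP p :&: BP r| * (2 ^ n * 2 ^ n) = 8 * 2 ^ (n * n).
Proof.
move=> pP rP; have n2 := P_n2 pP.
have H1 := C3u (P_neq pP) (P_neq rP); have H2 := C3l (P_neq pP) (P_neq rP).
have -> : AP p :&: BP r = E3 p.1 p.2 r.1 r.2 by apply/setP => M; rewrite in_setI !inE.
have -> : 2 ^ n * 2 ^ n = 8 * (2 ^ (n - 2 + n.-1)).
  by rewrite expnD {1}(e2 n2) (e1 (ltnW n2)); ring.
by rewrite mulnCA; congr (8 * _); apply/eqP; rewrite eqn_leq H1 H2.
Qed.

Lemma L4 p q r : p \in P -> q \in P -> r \in P -> p != q ->
  (#|AP p :&: AP q :&: BP r| * (2 ^ n * 2 ^ n * 2 ^ n) <= 32 * 2 ^ (n * n))%N.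
Proof.
move=> pP qP rP pq; have n2 := P_n2 pP.
have [u [v [u1 u2 uv Hq]]] := pick_uv pP qP pq.
have := C4 (P_neq pP) u1 u2 uv (P_neq rP).
have -> : E4 p.1 p.2 u v r.1 r.2 = AP p :&: AP q :&: BP r.
  by apply/setP => M; rewrite !in_setI Hq !inE andbA.
have -> : 2 ^ n * 2 ^ n * 2 ^ n = 32 * (2 ^ (n - 2 + (n - 2) + n.-1)).
  by rewrite !expnD {1 2}(e2 n2) (e1 (ltnW n2)); ring.
by rewrite mulnCA leq_mul2l.
Qed.

Definition a (M : mat) := \sum_(p in P) ((M \in AP p) : nat).
Definition b (M : mat) := \sum_(p in P) ((M \in BP p) : nat).
Definition cA (M : mat) := \sum_(p in P) \sum_(q in P | q != p) (((M \in AP p) && (M \in AP q)) : nat).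
Definition cB (M : mat) := \sum_(p in P) \sum_(q in P | q != p) (((M \in BP p) && (M \in BP q)) : nat).

Lemma R11E M : R11 M = [exists p in P, M \in AP p].
Proof.
apply/existsP/existsP => [[i /existsP[j /andP[ij H]]] | [[i j] /andP[pP H]]].
  case: (ltnP i j) => lij.
    by exists (i, j); rewrite !inE /= lij.
  exists (j, i); rewrite !inE /= -cols_sym H andbT ltn_neqAle lij andbT.
  by rewrite eq_sym.
exists i; apply/existsP; exists j; rewrite inE in H; rewrite H andbT.
by apply: contraTneq pP => ->; rewrite inE ltnn.
Qed.

Lemma rows_sym (M : mat) x y : rows_eq_up_to_sign M x y = rows_eq_up_to_sign M y x.
Proof. by rewrite !rows_tr cols_sym. Qed.

Lemma L11E M : L11 M = [exists p in P, M \in BP p].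
Proof.
apply/existsP/existsP => [[i /existsP[j /andP[ij H]]] | [[i j] /andP[pP H]]].
  case: (ltnP i j) => lij.
    by exists (i, j); rewrite !inE /= lij.
  exists (j, i); rewrite !inE /= -rows_sym H andbT ltn_neqAle lij andbT.
  by rewrite eq_sym.
exists i; apply/existsP; exists j; rewrite inE in H; rewrite H andbT.
by apply: contraTneq pP => ->; rewrite inE ltnn.
Qed.

Lemma aE M : R11 M = (0 < a M)%N.
Proof. by rewrite R11E /a pos_sum. Qed.
Lemma bE M : L11 M = (0 < b M)%N.
Proof. by rewrite L11E /b pos_sum. Qed.

Lemma pw1 M : (2 * a M <= 2 * R11 M + cA M)%N.
Proof.
have sq := sq_sum P (fun p => M \in AP p); rewrite aE.
rewrite -/(a M) -/(cA M) in sq; move: sq.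
case: (a M) => [|[|[|x]]] /=; nia.
Qed.

Lemma pw2 M : (2 * (a M * b M) <= 2 * (R11 M && L11 M) + cA M * b M + cB M * a M)%N.
Proof.
have sq := sq_sum P (fun p => M \in AP p); rewrite -/(a M) -/(cA M) in sq.
have sq' := sq_sum P (fun p => M \in BP p); rewrite -/(b M) -/(cB M) in sq'.
rewrite aE bE; move: sq sq'.
case: (a M) => [|[|[|x]]]; case: (b M) => [|[|[|y]]] /=; nia.
Qed.

Lemma pw3 M : ((R11 M && L11 M) <= a M * b M)%N.
Proof. rewrite aE bE; case: (a M) => [|x]; case: (b M) => [|y] //=; nia. Qed.

Lemma sum_a : \sum_M a M = \sum_(p in P) #|AP p|.
Proof. rewrite /a exchange_big; apply: eq_bigr => p _; exact: sumcardT. Qed.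

Lemma sum_cA : \sum_M cA M = \sum_(p in P) \sum_(q in P | q != p) #|AP p :&: AP q|.
Proof.
rewrite /cA exchange_big; apply: eq_bigr => p _; rewrite exchange_big.
apply: eq_bigr => q _; rewrite -sumcardT; apply: eq_bigr => M _; by rewrite in_setI.
Qed.

Lemma sum_ab : \sum_M a M * b M = \sum_(p in P) \sum_(r in P) #|AP p :&: BP r|.
Proof.
rewrite /a /b; under eq_bigr do rewrite big_distrl /=.
rewrite exchange_big; apply: eq_bigr => p _.
under eq_bigr do rewrite big_distrr /=.
rewrite exchange_big; apply: eq_bigr => r _; rewrite -sumcardT; apply: eq_bigr => M _.
by rewrite in_setI; case: (M \in AP p); case: (M \in BP r).
Qed.

Lemma sum_cAb : \sum_M cA M * b M =
  \sum_(p in P) \sum_(q in P | q != p) \sum_(r in P) #|AP p :&: AP q :&: BP r|.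
Proof.
rewrite /cA /b; under eq_bigr do rewrite big_distrl /=.
rewrite exchange_big; apply: eq_bigr => p _.
under eq_bigr do rewrite big_distrl /=.
rewrite exchange_big; apply: eq_bigr => q _.
under eq_bigr do rewrite big_distrr /=.
rewrite exchange_big; apply: eq_bigr => r _; rewrite -sumcardT; apply: eq_bigr => M _.
by rewrite !in_setI; case: (M \in AP p); case: (M \in AP q); case: (M \in BP r).
Qed.

Lemma sum_cBa : \sum_M cB M * a M =
  \sum_(p in P) \sum_(q in P | q != p) \sum_(r in P) #|BP p :&: BP q :&: AP r|.
Proof.
rewrite /cB /a; under eq_bigr do rewrite big_distrl /=.
rewrite exchange_big; apply: eq_bigr => p _.
under eq_bigr do rewrite big_distrl /=.
rewrite exchange_big; apply: eq_bigr => q _.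
under eq_bigr do rewrite big_distrr /=.
rewrite exchange_big; apply: eq_bigr => r _; rewrite -sumcardT; apply: eq_bigr => M _.
by rewrite !in_setI; case: (M \in BP p); case: (M \in BP q); case: (M \in AP r).
Qed.

Lemma card_tr p q r : #|BP p :&: BP q :&: AP r| = #|AP p :&: AP q :&: BP r|.
Proof.
rewrite -(card_imset (AP p :&: AP q :&: BP r) (@trmx_inj _ _ _)); apply: eq_card => M.
have cE (N : mat) x y : cols_eq_up_to_sign N x y = rows_eq_up_to_sign (trmx N) x y.
  by rewrite rows_tr trmxK.
apply/idP/imsetP => [H | [N HN ->]].
  exists (trmx M); last by rewrite trmxK.
  by move: H; rewrite !in_setI !inE -!rows_tr -cE.
by move: HN; rewrite !in_setI !inE -!rows_tr -!cE.
Qed.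

Lemma B1 : (#|P| * (2 * 2 ^ (n * n)) <= (\sum_M a M) * 2 ^ n)%N.
Proof.
rewrite sum_a.
have := @sum_bound_ge _ (fun p => p \in P) (fun p => #|AP p|) (2 ^ n) (2 * 2 ^ (n * n)) L1.
by rewrite setmem.
Qed.

Lemma B2 : ((\sum_M cA M) * (2 ^ n * 2 ^ n) <= #|P| * ((#|P| - 1) * (4 * 2 ^ (n * n))))%N.
Proof.
rewrite sum_cA.
have := @sum_bound _ (fun p => p \in P) (fun p => \sum_(q in P | q != p) #|AP p :&: AP q|)
  (2 ^ n * 2 ^ n) ((#|P| - 1) * (4 * 2 ^ (n * n))).
rewrite setmem; apply => p pP; rewrite -(card_minus pP); apply: sum_bound => q /andP[qP qp].
by apply: L2; rewrite // eq_sym.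
Qed.

Lemma B3 : ((\sum_M a M * b M) * (2 ^ n * 2 ^ n) = #|P| * (#|P| * (8 * 2 ^ (n * n))))%N.
Proof.
rewrite sum_ab big_distrl -sum_nat_const; apply: eq_bigr => p pP.
rewrite big_distrl -sum_nat_const; apply: eq_bigr => r rP; exact: L3.
Qed.

Lemma B4 : ((\sum_M cA M * b M) * (2 ^ n * 2 ^ n * 2 ^ n)
   <= #|P| * ((#|P| - 1) * (#|P| * (32 * 2 ^ (n * n)))))%N.
Proof.
rewrite sum_cAb.
have := @sum_bound _ (fun p => p \in P)
  (fun p => \sum_(q in P | q != p) \sum_(r in P) #|AP p :&: AP q :&: BP r|)
  (2 ^ n * 2 ^ n * 2 ^ n) ((#|P| - 1) * (#|P| * (32 * 2 ^ (n * n)))).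
rewrite setmem; apply => p pP; rewrite -(card_minus pP); apply: sum_bound => q /andP[qP qp].
have := @sum_bound _ (fun r => r \in P) (fun r => #|AP p :&: AP q :&: BP r|)
  (2 ^ n * 2 ^ n * 2 ^ n) (32 * 2 ^ (n * n)).
rewrite setmem; apply => r rP; apply: L4 => //; by rewrite eq_sym.
Qed.

Lemma B5 : ((\sum_M cB M * a M) * (2 ^ n * 2 ^ n * 2 ^ n)
   <= #|P| * ((#|P| - 1) * (#|P| * (32 * 2 ^ (n * n)))))%N.
Proof.
rewrite sum_cBa.
have := @sum_bound _ (fun p => p \in P)
  (fun p => \sum_(q in P | q != p) \sum_(r in P) #|BP p :&: BP q :&: AP r|)
  (2 ^ n * 2 ^ n * 2 ^ n) ((#|P| - 1) * (#|P| * (32 * 2 ^ (n * n)))).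
rewrite setmem; apply => p pP; rewrite -(card_minus pP); apply: sum_bound => q /andP[qP qp].
have := @sum_bound _ (fun r => r \in P) (fun r => #|BP p :&: BP q :&: AP r|)
  (2 ^ n * 2 ^ n * 2 ^ n) (32 * 2 ^ (n * n)).
rewrite setmem; apply => r rP; rewrite card_tr; apply: L4 => //; by rewrite eq_sym.
Qed.

Lemma count_facts :
  let x := #|[set M : mat | R11 M]| in
  let y := #|[set M : mat | R11 M && L11 M]| in
  let z := #|[set M : mat | R11 M && ~~ L11 M]| in
  [/\ x = z + y, (2 * (\sum_M a M) <= 2 * x + \sum_M cA M)%N,
      (2 * (\sum_M a M * b M) <= 2 * y + \sum_M cA M * b M + \sum_M cB M * a M)%N
    & (y <= \sum_M a M * b M)%N].
Proof.
move=> x y z; rewrite /x /y /z -!sumcardT; split.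
- rewrite -big_split; apply: eq_bigr => M _; rewrite !inE.
  by case: (R11 M); case: (L11 M).
- rewrite big_distrr /= big_distrr /= -big_split; apply: leq_sum => M _; rewrite inE.
  exact: pw1.
- rewrite big_distrr /= big_distrr /= -!big_split; apply: leq_sum => M _; rewrite inE.
  exact: pw2.
- by apply: leq_sum => M _; rewrite inE; apply: pw3.
Qed.

End Chars.

Lemma nat1 C N Y SA ScA SAB x y z :
  (C * (2 * N) <= SA * Y -> ScA * (Y * Y) <= C * ((C - 1) * (4 * N)) ->
  SAB * (Y * Y) = C * (C * (8 * N)) ->
  2 * SA <= 2 * x + ScA -> y <= SAB -> x = z + y ->
  2 * C * N * Y + 4 * C * N <= z * (Y * Y) + 12 * C * C * N)%N.
Proof.
move=> h1 h2 h3 h4 h5 h6.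
have k1 := leq_mul h4 (leqnn (Y * Y)).
have k2 := leq_mul h1 (leqnn Y).
have k3 := leq_mul h5 (leqnn (Y * Y)).
have k4 : (C * N <= C * C * N)%N by case: C {k1 k2 h1 h2 h3} => // C; rewrite leq_mul2r leq_pmulr ?orbT.
subst x. nia.
Qed.

Lemma nat2 C N Y SAB T1 T2 y :
  (2 * SAB <= 2 * y + T1 + T2 -> T1 * (Y * Y * Y) <= C * ((C - 1) * (C * (32 * N))) ->
   T2 * (Y * Y * Y) <= C * ((C - 1) * (C * (32 * N))) ->
   SAB * (Y * Y) = C * (C * (8 * N)) ->
   8 * C * C * N * Y <= y * (Y * Y * Y) + 32 * C * C * C * N)%N.
Proof.
move=> h1 h2 h3 h4.
have k1 := leq_mul h1 (leqnn (Y * Y * Y)).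
have k4 : (C * ((C - 1) * (C * (32 * N))) <= 32 * C * C * C * N)%N.
  have e : (C - 1 <= C)%N := leq_subr 1 C.
  have := leq_mul (leqnn C) (leq_mul e (leqnn (C * (32 * N)))).
  have -> : (C * (C * (C * (32 * N))) = 32 * C * C * C * N)%N by ring.
  done.
nia.
Qed.



Section RatPart.
Local Open Scope ring_scope.
Lemma rat1 (C N Y z : nat) : (0 < N)%N -> (0 < Y)%N ->
  (2 * C * N * Y + 4 * C * N <= z * (Y * Y) + 12 * C * C * N)%N ->
  2 * C%:R * (1 / Y%:R) - (12 * C%:R ^+ 2 - 4 * C%:R) * (1 / Y%:R) ^+ 2
   <= z%:R / N%:R :> rat.
Proof.
move=> N0 Y0; rewrite -(ler_nat rat) !natrD !natrM => key.
have N0' : 0 < N%:R :> rat by rewrite ltr0n.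
have Y0' : 0 < Y%:R :> rat by rewrite ltr0n.
rewrite ler_pdivlMr //.
have -> : (2 * C%:R * (1 / Y%:R) - (12 * C%:R ^+ 2 - 4 * C%:R) * (1 / Y%:R) ^+ 2) * N%:R
  = (2 * C%:R * N%:R * Y%:R + 4 * C%:R * N%:R - 12 * C%:R * C%:R * N%:R) / (Y%:R * Y%:R) :> rat.
  by field; rewrite gt_eqF.
rewrite ler_pdivrMr ?mulr_gt0 //.
lra.
Qed.

Lemma rat2 (C N Y y n : nat) : (0 < N)%N -> (0 < Y)%N -> (C <= n * n)%N ->
  (y * (Y * Y) <= 8 * C * C * N)%N ->
  (8 * C * C * N * Y <= y * (Y * Y * Y) + 32 * C * C * C * N)%N ->
  `| 8 * C%:R ^+ 2 * (1 / Y%:R) ^+ 2 - y%:R / N%:R | <= 32 * n%:R ^+ 6 * (1 / Y%:R) ^+ 3 :> rat.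
Proof.
move=> N0 Y0 Cn h1 h2.
have C6 : (C * C * C <= n ^ 6)%N.
  have -> : (n ^ 6 = (n * n) * (n * n) * (n * n))%N by ring.
  by rewrite !leq_mul.
have C6' : C%:R * C%:R * C%:R <= n%:R ^+ 6 :> rat by rewrite -natrX -!natrM ler_nat.
move: h1 h2; rewrite -!(ler_nat rat) !natrD !natrM => h1 h2.
have N0' : 0 < N%:R :> rat by rewrite ltr0n.
have Y0' : 0 < Y%:R :> rat by rewrite ltr0n.
set c := C%:R in h1 h2 C6' *; set NN := N%:R in h1 h2 N0' *; set YY := Y%:R in h1 h2 Y0' *.
set yy := y%:R in h1 h2 *; set m := n%:R ^+ 6 in C6' *.
have -> : 8 * c ^+ 2 * (1 / YY) ^+ 2 - yy / NN = ((8 * c * c * NN - yy * YY * YY) * YY) / (NN * YY * YY * YY).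
  by field; rewrite !gt_eqF.
have -> : 32 * m * (1 / YY) ^+ 3 = (32 * m * NN) / (NN * YY * YY * YY).
  by field; rewrite !gt_eqF.
have P2 : 0 < NN * YY * YY * YY by rewrite !mulr_gt0.
have a0 : 0 <= (8 * c * c * NN - yy * YY * YY) * YY.
  by apply: mulr_ge0; [rewrite subr_ge0 -mulrA | exact: ltW].
have m0 : 0 <= m by rewrite exprn_ge0 // ler0n.
have cNm : 32 * (c * c * c) * NN <= 32 * m * NN.
  by rewrite ler_pM2r // ler_pM2l.
rewrite ger0_norm; last by rewrite divr_ge0 // ltW.
rewrite ler_pM2r; last by rewrite invr_gt0.
apply: le_trans cNm.
have -> : (8 * c * c * NN - yy * YY * YY) * YY = 8 * c * c * NN * YY - yy * (YY * YY * YY) by ring.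
rewrite lerBlDr; apply: le_trans h2 _.
rewrite le_eqVlt; apply/orP; left; apply/eqP; ring.
Qed.


End RatPart.

Local Open Scope ring_scope.

Lemma pow_half n : (1 / 2 : rat) ^+ n = 1 / (2 ^ n)%:R.
Proof. by rewrite expr_div_n expr1n natrX. Qed.
Lemma pow_quarter n : (1 / 4 : rat) ^+ n = (1 / (2 ^ n)%:R) ^+ 2.
Proof.
rewrite -pow_half -exprM mulnC exprM; congr (_ ^+ _).
all: try by rewrite expr_div_n expr1n.
Qed.
Lemma pow_eighth n : (1 / 8 : rat) ^+ n = (1 / (2 ^ n)%:R) ^+ 3.
Proof.
rewrite -pow_half -exprM mulnC exprM; congr (_ ^+ _).
all: try by rewrite expr_div_n expr1n.
Qed.

Theorem mainTheorem13 :
  (forall n : nat, (2 <= n)%N ->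
     2 * ('C(n, 2))%:R * (1 / 2 : rat) ^+ n
       - (12 * ('C(n, 2))%:R ^+ 2 - 4 * ('C(n, 2))%:R) * (1 / 4 : rat) ^+ n
     <= prob (fun M : 'M[bool]_n => R11 M && ~~ L11 M)) /\
  (exists K : rat, exists N : nat, forall n : nat, (N <= n)%N ->
     `| prob (fun M : 'M[bool]_n => R11 M && ~~ L11 M)
        - (prob (fun M : 'M[bool]_n => R11 M)
           - 8 * ('C(n, 2))%:R ^+ 2 * (1 / 4 : rat) ^+ n) |
     <= K * (n%:R ^+ 6) * (1 / 8 : rat) ^+ n).
Proof.
split.
  move=> n n2; have [h6 h4 h7 h5] := count_facts n.
  have hC : 'C(n, 2) = #|P n| by rewrite cardPairs.
  rewrite hC /prob pow_half pow_quarter.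
  apply: rat1; [by rewrite expn_gt0 | by rewrite expn_gt0 |].
  exact: (nat1 (B1 n) (B2 n) (B3 n) h4 h5 h6).
exists 32, 2%N => n n2; have [h6 h4 h7 h5] := count_facts n.
have hC : 'C(n, 2) = #|P n| by rewrite cardPairs.
rewrite hC /prob pow_quarter pow_eighth h6 natrD.
set z := #|[set M : 'M[bool]_n | R11 M && ~~ L11 M]|.
set y := #|[set M : 'M[bool]_n | R11 M && L11 M]|.
set t := 8 * _ * _.
have -> : z%:R / (2 ^ (n * n))%:R - ((z%:R + y%:R) / (2 ^ (n * n))%:R - t)
   = t - y%:R / (2 ^ (n * n))%:R :> rat by ring.
rewrite /t; apply: rat2; [by rewrite expn_gt0 | by rewrite expn_gt0 | | |].
- by apply: leq_trans (max_card _) _; rewrite card_prod card_ord.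
- have := leq_mul h5 (leqnn (2 ^ n * 2 ^ n)); rewrite B3.
  by have -> : (#|P n| * (#|P n| * (8 * 2 ^ (n * n))) = 8 * #|P n| * #|P n| * 2 ^ (n * n))%N by ring.
- exact: (nat2 h7 (B4 n) (B5 n) (B3 n)).
Qed.
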